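(* Let $n=2$, $m=1$, $c_1=10$, so $\mathcal{X}=\{0,1,\dots,10\}$. Suppose bidder 2 answers every demand query at price $p\ge0$ as follows: if $p<94/10$ she answers $10$; if $p=94/10$ she answers either $10$ or $0$; if $p>94/10$ she answers $0$. Let $\{p^1,\dots,p^{\ell}\}\subset[0,\infty)$ be the finite set of prices at which bidder 2 is queried, with responses $x_2^*(p^r)$. For $\lambda>0$ let $\theta^*$ be any (local) minimizer of the L2-regularized loss $$L^{\lambda}(\theta)=\sum_{r=1}^{\ell}\Big(\mathcal{M}_\theta(\hat x_2^*(p^r))-p^r\hat x_2^*(p^r)-\big(\mathcal{M}_\theta(x_2^*(p^r))-p^r x_2^*(p^r)\big)\Big)^+ +\lambda\|\theta\|_2^2,$$ where $\hat x_2^*(p^r)\in\arg\max_{x\in\mathcal{X}}\big(\mathcal{M}_\theta(x)-p^r x\big)$ and $\mathcal{M}_\theta$ is an MVNN. Then the MVNN $\mathcal{M}_{\theta^*}:\mathcal{X}\to\mathbb{R}$ is linear.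
   Context: An MVNN (monotone-value neural network) on $\mathcal{X}=\{0,\dots,c_1\}\times\cdots\times\{0,\dots,c_m\}$ with parameters $\theta=(W,b)$ is $\mathcal{M}_\theta(x)=W^{K}\varphi_{0,t^{K-1}}\big(\cdots\varphi_{0,t^{1}}(W^{1}(Dx)+b^{1})\cdots\big)$, where $D=\mathrm{diag}(1/c_1,\dots,1/c_m)$ is a fixed normalization, the weight matrices $W^k$ (trainable) have nonnegative entries, the biases $b^k$ (trainable) have nonpositive entries, and the activation is the bounded ReLU $\varphi_{0,t}(z)=\min(t,\max(0,z))$ applied componentwise with fixed cutoffs $t^k>0$ (no linear skip connections). $\|\theta\|_2^2$ is the sum of squares of all weights and biases. ''Linear'' means $\mathcal{M}_{\theta^*}(x)=\alpha x$ for all $x\in\mathcal{X}$, for some constant $\alpha$. $(\cdot)^+=\max(\cdot,0)$. *)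

(* Defs.v *)
From mathcomp Require Import all_boot all_order all_algebra.
From mathcomp Require Import reals.
Set Implicit Arguments. Unset Strict Implicit. Unset Printing Implicit Defensive.
Import Order.TTheory GRing.Theory Num.Theory.
Local Open Scope ring_scope.

(* Widths: layer k (k >= 1) has width d (k-1); the input layer (k = 0) has
   width 1 (m = 1 item). *)
Definition wd (d : nat -> nat) (k : nat) : nat :=
  if k is k'.+1 then d k' else 1%N.

(* Parameters of an MVNN with H hidden layers of widths d 0, ..., d (H-1).
   mW k : hidden weight matrix W^{k+1}, mb k : hidden bias b^{k+1} (k < H),
   mWout : output weights W^K (K = H+1).  Entries with index k >= H are
   unused (they do not enter the network, the norm, nor the distance). *)
Record mvnn_params (R : Type) (H : nat) (d : nat -> nat) := MvnnParams {
  mW : forall k : nat, 'M[R]_(wd d k.+1, wd d k);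
  mb : forall k : nat, 'cV[R]_(wd d k.+1);
  mWout : 'rV[R]_(wd d H) }.

Section MVNN.
Variables (R : realType) (H : nat) (d : nat -> nat) (t : nat -> R).

Definition brelu (c z : R) : R := Num.min c (Num.max 0 z).

(* output of hidden layer k; layer 0 is the normalized input D x = x / 10 *)
Fixpoint mvnn_hidden (th : mvnn_params R H d) (x : R) (k : nat)
  : 'cV[R]_(wd d k) :=
  match k return 'cV[R]_(wd d k) with
  | 0 => const_mx (x / 10%:R)
  | k'.+1 => map_mx (brelu (t k'))
               (mW th k' *m mvnn_hidden th x k' + mb th k')
  end.

Definition mvnn_eval (th : mvnn_params R H d) (x : R) : R :=
  (mWout th *m mvnn_hidden th x H) 0 0.

Definition mvnn_feasible (th : mvnn_params R H d) : Prop :=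
  (forall k : 'I_H, (forall i j, 0 <= mW th k i j) /\ (forall i, mb th k i 0 <= 0))
  /\ (forall j, 0 <= mWout th 0 j).

Definition mvnn_sqdist (th1 th2 : mvnn_params R H d) : R :=
  \sum_(k < H) (\sum_i \sum_j (mW th1 k i j - mW th2 k i j) ^+ 2
                + \sum_i (mb th1 k i 0 - mb th2 k i 0) ^+ 2)
  + \sum_j (mWout th1 0 j - mWout th2 0 j) ^+ 2.

Definition mvnn_sqnorm (th : mvnn_params R H d) : R :=
  \sum_(k < H) (\sum_i \sum_j (mW th k i j) ^+ 2 + \sum_i (mb th k i 0) ^+ 2)
  + \sum_j (mWout th 0 j) ^+ 2.

Definition mvnn_util (th : mvnn_params R H d) (p : R) (x : nat) : R :=
  mvnn_eval th x%:R - p * x%:R.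

(* max_{x in X} (M_th(x) - p x) = M_th(hat x) - p hat x for any argmax hat x *)
Definition mvnn_maxutil (th : mvnn_params R H d) (p : R) : R :=
  \big[Num.max/mvnn_util th p 0]_(x < 11) mvnn_util th p x.

Definition mvnn_loss (ps : seq R) (ans : R -> nat) (lam : R)
  (th : mvnn_params R H d) : R :=
  \sum_(p <- ps) Num.max 0 (mvnn_maxutil th p - mvnn_util th p (ans p))
  + lam * mvnn_sqnorm th.

Definition mvnn_local_min (ps : seq R) (ans : R -> nat) (lam : R)
  (th : mvnn_params R H d) : Prop :=
  mvnn_feasible th /\
  exists2 eps : R, 0 < eps &
    forall th' : mvnn_params R H d, mvnn_feasible th' ->
      mvnn_sqdist th' th < eps ->
      mvnn_loss ps ans lam th <= mvnn_loss ps ans lam th'.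

End MVNN.

(* Main.v *)
Require Import Defs.
From mathcomp Require Import all_boot all_order all_algebra.
From mathcomp Require Import reals ring lra.
Import Order.TTheory GRing.Theory Num.Theory.
Local Open Scope ring_scope.
Lemma brelu_cases {R : realType} (c z : R) (P : R -> Prop) :
  (z <= 0 -> P (Num.min c 0)) -> (0 <= z -> P (Num.min c z)) -> P (brelu c z).
Proof. rewrite /brelu; case: (leP 0 z) => h a b; [exact: b|apply: a; lra]. Qed.
Lemma min_cases {R : realType} (c z : R) (P : R -> Prop) :
  (c <= z -> P c) -> (z <= c -> P z) -> P (Num.min c z).
Proof. case: (leP c z) => h a b; [exact: a|apply: b; lra]. Qed.
Ltac br := repeat (match goal with |- context [brelu ?c ?z] => pattern (brelu c z); apply: brelu_cases => ? end);
           repeat (match goal with |- context [Num.min ?c ?z] => pattern (Num.min c z); apply: min_cases => ? end).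
Lemma brelu_ge0 {R : realType} (c z : R) : 0 <= c -> 0 <= brelu c z.
Proof. move=> hc; br; lra. Qed.
Lemma brelu_mono {R : realType} (c z1 z2 : R) : z1 <= z2 -> brelu c z1 <= brelu c z2.
Proof. move=> h; br; lra. Qed.
Lemma brelu_id {R : realType} (c z : R) : 0 <= z -> z <= c -> brelu c z = z.
Proof. move=> h1 h2; br; lra. Qed.
Lemma brelu_neg {R : realType} (c z : R) : 0 <= c -> z <= 0 -> brelu c z = 0.
Proof. move=> h1 h2; br; lra. Qed.
Lemma brelu_sat {R : realType} (c z : R) : 0 <= c -> c <= z -> brelu c z = c.
Proof. move=> h1 h2; br; lra. Qed.
Lemma brelu_lemax {R : realType} (c z : R) : brelu c z <= Num.max 0 z.
Proof. case: (leP 0 z) => h; br; lra. Qed.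
Lemma brelu_scale {R : realType} (c l z : R) : 0 <= c -> 0 <= l -> l <= 1 -> z <= c ->
  brelu c (l * z) = l * brelu c z.
Proof.
move=> hc hl0 hl1 hz.
have [hz0|hz0] := leP 0 z.
  rewrite (@brelu_id R c z hz0 hz) brelu_id //; nra.
rewrite (@brelu_neg R c z hc (ltW hz0)) brelu_neg //; nra.
Qed.

Lemma hid_succ {R : realType} {H d} {t : nat -> R} {th : mvnn_params R H d} x k i :
  mvnn_hidden t th x k.+1 i 0 =
  brelu (t k) (\sum_j mW th k i j * mvnn_hidden t th x k j 0 + mb th k i 0).
Proof. by rewrite /= !mxE. Qed.

Lemma hid0E {R : realType} {H d} {t : nat -> R} {th : mvnn_params R H d} x i :
  mvnn_hidden t th x 0 i 0 = x / 10%:R.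
Proof. by rewrite /= mxE. Qed.

Lemma evalE {R : realType} {H d} {t : nat -> R} {th : mvnn_params R H d} x :
  mvnn_eval t th x = \sum_j mWout th 0 j * mvnn_hidden t th x H j 0.
Proof. by rewrite /mvnn_eval mxE. Qed.

Lemma feasW {R : realType} {H d} {th : mvnn_params R H d} :
  mvnn_feasible th -> forall k, (k < H)%N ->
  (forall i j, 0 <= mW th k i j) /\ (forall i, mb th k i 0 <= 0).
Proof. by case=> h _ k hk; exact: (h (Ordinal hk)). Qed.

Lemma hid_ge0 {R : realType} {H d} {t : nat -> R} {th : mvnn_params R H d} x k i :
  (forall k, (k < H)%N -> 0 < t k) -> 0 <= x -> (k <= H)%N ->
  0 <= mvnn_hidden t th x k i 0.
Proof.
move=> ht hx; case: k i => [|k] i hk; first by rewrite hid0E divr_ge0.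
rewrite hid_succ; apply: brelu_ge0; exact/ltW/ht.
Qed.

Lemma hid_at0 {R : realType} {H d} {t : nat -> R} {th : mvnn_params R H d} :
  (forall k, (k < H)%N -> 0 < t k) -> mvnn_feasible th ->
  forall k, (k <= H)%N -> forall i, mvnn_hidden t th 0 k i 0 = 0.
Proof.
move=> ht hf; elim=> [|k IH] hk i; first by rewrite hid0E mul0r.
rewrite hid_succ big1 ?add0r; last by move=> j _; rewrite IH ?mulr0 // ltnW.
apply: brelu_neg; first exact/ltW/ht.
by have [_ hb] := feasW hf _ hk; apply: hb.
Qed.

Lemma eval_at0 {R : realType} {H d} {t : nat -> R} {th : mvnn_params R H d} :
  (forall k, (k < H)%N -> 0 < t k) -> mvnn_feasible th ->
  mvnn_eval t th 0%:R = 0.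
Proof.
move=> ht hf; rewrite evalE big1 // => j _.
by rewrite (hid_at0 ht hf H (leqnn H)) mulr0.
Qed.

Lemma hid_mono {R : realType} {H d} {t : nat -> R} {th1 th2 : mvnn_params R H d} x :
  (forall k, (k < H)%N -> 0 < t k) -> 0 <= x ->
  (forall k, (k < H)%N -> forall i j, 0 <= mW th1 k i j /\ mW th1 k i j <= mW th2 k i j) ->
  (forall k, (k < H)%N -> forall i, mb th1 k i 0 = mb th2 k i 0) ->
  forall k, (k <= H)%N -> forall i,
  mvnn_hidden t th1 x k i 0 <= mvnn_hidden t th2 x k i 0.
Proof.
move=> ht hx hW hb; elim=> [|k IH] hk i; first by rewrite !hid0E.
rewrite !hid_succ hb //; apply/brelu_mono; rewrite lerD2r; apply: ler_sum => j _.
have [h1 h2] := hW k hk i j.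
apply: ler_pM => //; [apply: hid_ge0 => //; exact: ltnW | exact: IH (ltnW hk) j].
Qed.

Lemma hid_same10 {R : realType} {H d} {t : nat -> R} {th1 th2 : mvnn_params R H d} :
  (forall k, (k < H)%N -> forall i,
     brelu (t k) (\sum_j mW th1 k i j * mvnn_hidden t th2 10%:R k j 0 + mb th1 k i 0)
     = mvnn_hidden t th2 10%:R k.+1 i 0) ->
  forall k, (k <= H)%N -> forall i,
  mvnn_hidden t th1 10%:R k i 0 = mvnn_hidden t th2 10%:R k i 0.
Proof.
move=> h; elim=> [|k IH] hk i; first by rewrite !hid0E.
rewrite hid_succ -h //; congr (brelu _ (_ + _)); apply: eq_bigr => j _.
by rewrite IH // ltnW.
Qed.

Lemma star {R : realType} {H d} {t : nat -> R} {th : mvnn_params R H d} x :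
  (forall k, (k < H)%N -> 0 < t k) -> mvnn_feasible th -> 0 <= x -> x <= 10%:R ->
  (forall k, (k < H)%N -> forall i,
     \sum_j mW th k i j * mvnn_hidden t th 10%:R k j 0 + mb th k i 0 <= t k) ->
  forall k, (k <= H)%N -> forall i,
  mvnn_hidden t th x k i 0 <= x / 10%:R * mvnn_hidden t th 10%:R k i 0.
Proof.
move=> ht hf hx0 hx1 hns.
have hl0 : 0 <= x / 10%:R by rewrite divr_ge0.
have hl1 : x / 10%:R <= 1 by rewrite ler_pdivrMr // mul1r.
elim=> [|k IH] hk i.
  by rewrite !hid0E divff ?mulr1 // pnatr_eq0.
rewrite !hid_succ -brelu_scale //; last 2 first.
- exact/ltW/ht.
- exact: hns.
apply: brelu_mono.
have [hW hb] := feasW hf _ hk.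
apply: (le_trans (y := \sum_j mW th k i j * (x / 10%:R * mvnn_hidden t th 10%:R k j 0) + mb th k i 0)).
  rewrite lerD2r; apply: ler_sum => j _; apply: ler_wpM2l => //; exact: IH (ltnW hk) j.
rewrite mulrDr mulr_sumr.
under eq_bigr => j _ do rewrite mulrCA.
rewrite lerD2l; have := hb i; nra.
Qed.

Definition scp {R : realType} {H d} (rho : forall k, 'I_(wd d k.+1) -> R) (beta : R)
  (th : mvnn_params R H d) : mvnn_params R H d :=
  @MvnnParams R H d (fun k => \matrix_(i, j) (rho k i * mW th k i j))
    (fun k => \col_i (beta * mb th k i 0)) (mWout th).

Lemma scpW {R : realType} {H d} rho beta (th : mvnn_params R H d) k i j :
  mW (scp rho beta th) k i j = rho k i * mW th k i j.
Proof. by rewrite /= mxE. Qed.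

Lemma scpb {R : realType} {H d} rho beta (th : mvnn_params R H d) k i :
  mb (scp rho beta th) k i 0 = beta * mb th k i 0.
Proof. by rewrite /= mxE. Qed.

Lemma scp_feas {R : realType} {H d} rho beta (th : mvnn_params R H d) :
  mvnn_feasible th -> (forall k i, 0 <= rho k i) -> 0 <= beta ->
  mvnn_feasible (scp rho beta th).
Proof.
move=> [h1 h2] hr hb; split=> // k; have [hW hB] := h1 k; split.
  by move=> i j; rewrite scpW mulr_ge0.
by move=> i; rewrite scpb; have := hB i; nra.
Qed.

Lemma sqnorm_ge0 {R : realType} {H d} (th : mvnn_params R H d) : 0 <= mvnn_sqnorm th.
Proof.
rewrite /mvnn_sqnorm; apply: addr_ge0; apply: sumr_ge0 => k _; rewrite ?sqr_ge0 //.
by apply: addr_ge0; apply: sumr_ge0 => i _; rewrite ?sqr_ge0 //; apply: sumr_ge0 => j _; rewrite sqr_ge0.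
Qed.

Lemma sqdist_scp {R : realType} {H d} rho beta (th : mvnn_params R H d) s :
  (forall k i, (rho k i - 1) ^+ 2 <= s ^+ 2) -> (beta - 1) ^+ 2 <= s ^+ 2 ->
  mvnn_sqdist (scp rho beta th) th <= s ^+ 2 * mvnn_sqnorm th.
Proof.
move=> hr hb; rewrite /mvnn_sqdist /mvnn_sqnorm mulrDr mulr_sumr; apply: lerD.
  apply: ler_sum => k _; rewrite mulrDr !mulr_sumr; apply: lerD; apply: ler_sum => i _.
    rewrite mulr_sumr; apply: ler_sum => j _; rewrite scpW.
    have := hr k i; have := sqr_ge0 (mW th k i j); nra.
  rewrite scpb; have := sqr_ge0 (mb th k i 0); nra.
rewrite mulr_sumr; apply: ler_sum => j _ /=; rewrite subrr expr0n /=.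
by rewrite mulr_ge0 ?sqr_ge0.
Qed.

Lemma sqnorm_scp {R : realType} {H d} rho beta (th : mvnn_params R H d) :
  (forall k i, 0 <= rho k i <= 1) -> 0 <= beta <= 1 ->
  mvnn_sqnorm th <= mvnn_sqnorm (scp rho beta th) ->
  (forall k : 'I_H, forall i j, (1 - rho k i ^+ 2) * mW th k i j ^+ 2 = 0) /\
  (forall k : 'I_H, forall i, (1 - beta ^+ 2) * mb th k i 0 ^+ 2 = 0).
Proof.
move=> hr hb hle.
have E : mvnn_sqnorm th - mvnn_sqnorm (scp rho beta th) =
  \sum_(k < H) (\sum_i \sum_j (1 - rho k i ^+ 2) * mW th k i j ^+ 2
                + \sum_i (1 - beta ^+ 2) * mb th k i 0 ^+ 2).
  rewrite /mvnn_sqnorm /= opprD addrACA subrr addr0 -sumrB; apply: eq_bigr => k _.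
  rewrite opprD addrACA -!sumrB; congr (_ + _); apply: eq_bigr => i _.
    rewrite -sumrB; apply: eq_bigr => j _; rewrite !mxE; ring.
  rewrite !mxE; ring.
have hT : forall k : 'I_H, 0 <= \sum_i \sum_j (1 - rho k i ^+ 2) * mW th k i j ^+ 2
                + \sum_i (1 - beta ^+ 2) * mb th k i 0 ^+ 2.
  move=> k; apply: addr_ge0; apply: sumr_ge0 => i _.
    apply: sumr_ge0 => j _; have := hr k i; move=> /andP[h1 h2]; apply: mulr_ge0; last exact: sqr_ge0.
    nra.
  move: hb => /andP[h1 h2]; apply: mulr_ge0; last exact: sqr_ge0. nra.
have E0 : \sum_(k < H) (\sum_i \sum_j (1 - rho k i ^+ 2) * mW th k i j ^+ 2
                + \sum_i (1 - beta ^+ 2) * mb th k i 0 ^+ 2) = 0.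
  apply/le_anti/andP; split; last exact: sumr_ge0.
  by rewrite -E subr_le0.
have Hk := fun k => psumr_eq0P (fun k _ => hT k) E0 (i := k) isT.
split.
- move=> k i j; have /eqP := Hk k; rewrite paddr_eq0; last 2 first.
  + apply: sumr_ge0 => i' _; apply: sumr_ge0 => j' _; have := hr k i'; move=> /andP[h1 h2].
    apply: mulr_ge0; last exact: sqr_ge0. nra.
  + apply: sumr_ge0 => i' _; move: hb => /andP[h1 h2]; apply: mulr_ge0; last exact: sqr_ge0. nra.
  case/andP=> /eqP h _.
  have hi : forall i', 0 <= \sum_j (1 - rho k i' ^+ 2) * mW th k i' j ^+ 2.
    move=> i'; apply: sumr_ge0 => j' _; have := hr k i'; move=> /andP[h1 h2].
    apply: mulr_ge0; last exact: sqr_ge0. nra.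
  have := psumr_eq0P (fun i' _ => hi i') h (i := i) isT => h2.
  apply: (psumr_eq0P _ h2 (i := j) isT) => j' _.
  have := hr k i; move=> /andP[h3 h4]; apply: mulr_ge0; last exact: sqr_ge0. nra.
- move=> k i; have /eqP := Hk k; rewrite paddr_eq0; last 2 first.
  + apply: sumr_ge0 => i' _; apply: sumr_ge0 => j' _; have := hr k i'; move=> /andP[h1 h2].
    apply: mulr_ge0; last exact: sqr_ge0. nra.
  + apply: sumr_ge0 => i' _; move: hb => /andP[h1 h2]; apply: mulr_ge0; last exact: sqr_ge0. nra.
  case/andP=> _ /eqP h.
  apply: (psumr_eq0P _ h (i := i) isT) => i' _.
  move: hb => /andP[h1 h2]; apply: mulr_ge0; last exact: sqr_ge0. nra.
Qed.

Lemma bigmax_ub {R : realType} (idx : R) n (F : 'I_n -> R) :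
  idx <= \big[Num.max/idx]_(i < n) F i /\ forall i, F i <= \big[Num.max/idx]_(i < n) F i.
Proof.
elim: n F => [|n IH] F; first by rewrite big_ord0; split=> // -[].
rewrite big_ord_recl; have [h1 h2] := IH (fun i => F (lift ord0 i)); split.
  by rewrite le_max h1 orbT.
move=> i; case: (unliftP ord0 i) => [j ->|->]; first by rewrite le_max h2 orbT.
by rewrite le_max lexx.
Qed.

Lemma bigmax_le {R : realType} (idx M : R) n (F : 'I_n -> R) :
  idx <= M -> (forall i, F i <= M) -> \big[Num.max/idx]_(i < n) F i <= M.
Proof.
move=> h1 h2; apply: (big_ind (fun y => y <= M)) => //.
by move=> x y hx hy; rewrite ge_max hx hy.
Qed.

Lemma bigmax_mono {R : realType} (i1 i2 : R) n (F G : 'I_n -> R) :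
  i1 <= i2 -> (forall i, F i <= G i) ->
  \big[Num.max/i1]_(i < n) F i <= \big[Num.max/i2]_(i < n) G i.
Proof.
move=> h1 h2; apply: (big_ind2 (fun y z => y <= z)) => //.
by move=> x1 x2 y1 y2 hx hy; apply: le_max2.
Qed.

Definition hinge {R : realType} {H d} (t : nat -> R) (ps : seq R) (ans : R -> nat)
  (th : mvnn_params R H d) : R :=
  \sum_(p <- ps) Num.max 0 (mvnn_maxutil t th p - mvnn_util t th p (ans p)).

Lemma lossE {R : realType} {H d} (t : nat -> R) ps ans lam (th : mvnn_params R H d) :
  mvnn_loss t ps ans lam th = hinge t ps ans th + lam * mvnn_sqnorm th.
Proof. by []. Qed.

Lemma hinge_mono {R : realType} {H d} (t : nat -> R) ps ans (th1 th2 : mvnn_params R H d) :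
  (forall p, p \in ps -> ans p = 0%N \/ ans p = 10%N) ->
  (forall x, (x <= 10)%N -> mvnn_eval t th1 x%:R <= mvnn_eval t th2 x%:R) ->
  mvnn_eval t th1 0%:R = mvnn_eval t th2 0%:R ->
  mvnn_eval t th1 10%:R = mvnn_eval t th2 10%:R ->
  hinge t ps ans th1 <= hinge t ps ans th2.
Proof.
move=> hans hle h0 h10; rewrite /hinge !big_seq; apply: ler_sum => p hp.
apply: le_max2 => //; apply: lerB.
  rewrite /mvnn_maxutil; apply: bigmax_mono => [|i].
    by rewrite /mvnn_util lerD2r hle.
  by rewrite /mvnn_util lerD2r hle // -ltnS ltn_ord.
by rewrite /mvnn_util; case: (hans p hp) => ->; rewrite ?h0 ?h10.
Qed.

Lemma maxutil_star {R : realType} {H d} (t : nat -> R) (th : mvnn_params R H d) p :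
  mvnn_eval t th 0%:R = 0 ->
  (forall x, (x <= 10)%N -> mvnn_eval t th x%:R <= x%:R / 10%:R * mvnn_eval t th 10%:R) ->
  mvnn_maxutil t th p = Num.max 0 (mvnn_eval t th 10%:R - p * 10%:R).
Proof.
move=> h0 hs; set y := mvnn_eval t th 10%:R - p * 10%:R.
apply/le_anti/andP; split.
  apply: bigmax_le => [|i]; first by rewrite /mvnn_util h0 mulr0 subr0 le_max lexx.
  rewrite /mvnn_util.
  have hi : (i <= 10)%N by rewrite -ltnS ltn_ord.
  have := hs i hi.
  have hx0 : 0 <= (i%:R : R) by [].
  have hx1 : (i%:R : R) <= 10%:R by rewrite ler_nat.
  set l := (i%:R : R) / 10%:R.
  have hl0 : 0 <= l by rewrite divr_ge0.
  have hl1 : l <= 1 by rewrite ler_pdivrMr // mul1r.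
  have hpx : p * i%:R = l * (p * 10%:R).
    by rewrite /l; field.
  rewrite hpx => hx.
  have [hy|hy] := leP 0 y.
    rewrite /y in hy *; nra.
  rewrite /y in hy *; nra.
have [h1 h2] := bigmax_ub (mvnn_util t th p 0) 11 (fun x : 'I_11 => mvnn_util t th p x).
rewrite ge_max; apply/andP; split.
  have u0 : mvnn_util t th p 0 = 0 by rewrite /mvnn_util h0 mulr0 subr0.
  by apply: (le_trans _ h1); rewrite u0.
by move: (h2 (Ordinal (isT : (10 < 11)%N))); rewrite /mvnn_maxutil /mvnn_util /y /=.
Qed.

Lemma hinge_star {R : realType} {H d} (t : nat -> R) ps ans (th1 th2 : mvnn_params R H d) :
  (forall p, p \in ps -> ans p = 0%N \/ ans p = 10%N) ->
  mvnn_eval t th1 0%:R = 0 -> mvnn_eval t th2 0%:R = 0 ->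
  (forall x, (x <= 10)%N -> mvnn_eval t th1 x%:R <= x%:R / 10%:R * mvnn_eval t th1 10%:R) ->
  (forall x, (x <= 10)%N -> mvnn_eval t th2 x%:R <= x%:R / 10%:R * mvnn_eval t th2 10%:R) ->
  mvnn_eval t th1 10%:R = mvnn_eval t th2 10%:R ->
  hinge t ps ans th1 = hinge t ps ans th2.
Proof.
move=> hans h01 h02 hs1 hs2 h10; rewrite /hinge; apply: eq_big_seq => p hp.
rewrite !maxutil_star // h10; congr (Num.max 0 (_ - _)).
by rewrite /mvnn_util; case: (hans p hp) => ->; rewrite ?h01 ?h02 ?h10.
Qed.

Lemma brelu_lec {R : realType} (c z : R) : 0 <= c -> brelu c z <= c.
Proof. move=> hc; br; lra. Qed.

Lemma eval_star {R : realType} {H d} {t : nat -> R} {th : mvnn_params R H d} :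
  (forall k, (k < H)%N -> 0 < t k) -> mvnn_feasible th ->
  (forall k, (k < H)%N -> forall i,
     \sum_j mW th k i j * mvnn_hidden t th 10%:R k j 0 + mb th k i 0 <= t k) ->
  forall x, (x <= 10)%N -> mvnn_eval t th x%:R <= x%:R / 10%:R * mvnn_eval t th 10%:R.
Proof.
move=> ht hf hns x hx; rewrite !evalE mulr_sumr; apply: ler_sum => j _.
rewrite mulrCA; apply: ler_wpM2l; first exact: hf.2.
apply: star => //; first by rewrite ler_nat.
Qed.

Lemma aux_rho {R : realType} (s r : R) : 0 <= s -> s <= 1 -> 0 <= r <= 1 -> 0 <= 1 - s + s * r <= 1.
Proof. move=> h1 h2 /andP[h3 h4]; apply/andP; split; nra. Qed.
Lemma aux_neg {R : realType} (s a : R) : s <= 1 -> a < 0 -> (1 - s) * a <= 0.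
Proof. move=> h1 h2; nra. Qed.
Lemma aux_conv {R : realType} (s a u T : R) : 0 <= s -> s <= 1 -> a <= T -> u <= T -> (1 - s) * a + s * u <= T.
Proof. move=> h1 h2 h3 h4; nra. Qed.
Lemma aux_sq {R : realType} (s : R) : 0 < s -> s <= 1 -> 1 - (1 - s) ^+ 2 != 0.
Proof. move=> h1 h2; rewrite expr2; apply/eqP; nra. Qed.

Theorem propositionC5 (R : realType) (H : nat) (d : nat -> nat) (t : nat -> R)
  (ps : seq R) (ans : R -> nat) (lam : R) (th : mvnn_params R H d) :
  (forall k, (k < H)%N -> (0 < d k)%N) ->
  (forall k, (k < H)%N -> 0 < t k) ->
  uniq ps -> (forall p, p \in ps -> 0 <= p) ->
  (forall p, 0 <= p -> p < 94%:R / 10%:R -> ans p = 10%N) ->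
  (forall p, p = 94%:R / 10%:R -> ans p = 10%N \/ ans p = 0%N) ->
  (forall p, 94%:R / 10%:R < p -> ans p = 0%N) ->
  0 < lam ->
  mvnn_local_min t ps ans lam th ->
  exists alpha : R, forall x : nat, (x <= 10)%N ->
    mvnn_eval t th x%:R = alpha * x%:R.
Proof.
move=> hd ht huniq hps h1 h2 h3 hlam [hf [eps heps hmin]].
have hans : forall p, p \in ps -> ans p = 0%N \/ ans p = 10%N.
  move=> p hp; have hp0 := hps p hp; case: (ltgtP p (94%:R / 10%:R)) => h.
  - by right; exact: h1.
  - by left; exact: h3.
  - by case: (h2 p h) => ->; [right|left].
set N := mvnn_sqnorm th.
have hN : 0 <= N := sqnorm_ge0 th.
have hN1 : 0 < N + 1 by apply: (le_lt_trans hN); rewrite ltrDl ltr01.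
set s0 := Num.min (2^-1) (eps / (N + 1)).
have hs0 : 0 < s0.
  by rewrite lt_min; apply/andP; split; [rewrite invr_gt0 | apply: divr_gt0].
have hs0h : s0 <= 2^-1 by rewrite ge_min lexx.
have hs0e : s0 * (N + 1) <= eps.
  by rewrite -ler_pdivlMr // ge_min lexx orbT.
have LM : forall rho beta s, 0 < s -> s <= s0 ->
    (forall k i, 0 <= rho k i <= 1) -> 0 <= beta <= 1 ->
    (forall k i, (rho k i - 1) ^+ 2 <= s ^+ 2) -> (beta - 1) ^+ 2 <= s ^+ 2 ->
    hinge t ps ans (scp rho beta th) <= hinge t ps ans th ->
    mvnn_sqnorm th <= mvnn_sqnorm (scp rho beta th).
  move=> rho beta s hs hss hr hb hr2 hb2 hh.
  have hfe : mvnn_feasible (scp rho beta th).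
    apply: scp_feas => //; last by case/andP: hb.
    by move=> k i; case/andP: (hr k i).
  have hdist : mvnn_sqdist (scp rho beta th) th < eps.
    apply: le_lt_trans (sqdist_scp rho beta th s hr2 hb2) _.
    have hs1 : s <= 1.
      apply: (le_trans hss); apply: (le_trans hs0h).
      by rewrite invf_le1 // ler1n.
    have hss2 : s ^+ 2 <= s0.
      by apply: le_trans hss; rewrite expr2 ler_piMr // ltW.
    rewrite -/N; apply: (le_lt_trans (y := s0 * N)); first exact: ler_wpM2r.
    move: hs0e; rewrite mulrDr mulr1 => hs0e; apply: (lt_le_trans _ hs0e); by rewrite ltrDl.
  have := hmin _ hfe hdist; rewrite !lossE -/N => hl.
  have : lam * N <= lam * mvnn_sqnorm (scp rho beta th).
    rewrite -(lerD2l (hinge t ps ans th)); apply: (le_trans hl); rewrite lerD2r //.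
  by rewrite ler_pM2l.
have h2i : (2^-1 : R) <= 1 by rewrite invf_le1 // ler1n.
have nsat : forall k, (k < H)%N -> forall i,
    \sum_j mW th k i j * mvnn_hidden t th 10%:R k j 0 + mb th k i 0 <= t k.
  move=> k hk i; rewrite leNgt; apply/negP => hsat.
  have [hW hB] := feasW hf _ hk.
  have hBi := hB i.
  have htk := ht k hk.
  move: hsat.
  set c := \sum_j mW th k i j * mvnn_hidden t th 10%:R k j 0 => hsat.
  have hc : 0 < c by clear -hsat hBi htk; lra.
  set s := Num.min s0 ((c + mb th k i 0 - t k) / c).
  have hs : 0 < s.
    by rewrite /s lt_min; apply/andP; split => //; apply: divr_gt0 => //; clear -hsat; lra.
  have hss : s <= s0 by rewrite /s ge_min lexx.
  have hsc : s * c <= c + mb th k i 0 - t k.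
    by rewrite -ler_pdivlMr // /s ge_min lexx orbT.
  have hs1 : s <= 1 by apply: (le_trans hss); apply: (le_trans hs0h).
  pose rho := fun (k' : nat) (i' : 'I_(wd d k'.+1)) =>
    (if (k' == k) && (nat_of_ord i' == nat_of_ord i) then 1 - s else 1) : R.
  have hr : forall k' i', 0 <= rho k' i' <= 1.
    by move=> k' i'; rewrite /rho; case: ifP => _; apply/andP; split; clear -hs hs1; lra.
  have hr2 : forall k' i', (rho k' i' - 1) ^+ 2 <= s ^+ 2.
    move=> k' i'; rewrite /rho; case: ifP => _.
      by rewrite (_ : 1 - s - 1 = - s) ?sqrrN //; ring.
    by rewrite subrr expr0n /= sqr_ge0.
  have hb1 : (0 : R) <= (1 : R) <= 1.
    by rewrite ler01 lexx.
  have hb2 : ((1 : R) - 1) ^+ 2 <= s ^+ 2 by rewrite subrr expr0n /= sqr_ge0.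
  have hfe : mvnn_feasible (scp rho 1 th).
    by apply: scp_feas => // k' i'; case/andP: (hr k' i').
  have pres : forall k', (k' < H)%N -> forall i',
      brelu (t k') (\sum_j mW (scp rho 1 th) k' i' j * mvnn_hidden t th 10%:R k' j 0
                    + mb (scp rho 1 th) k' i' 0) = mvnn_hidden t th 10%:R k'.+1 i' 0.
    move=> k' hk' i'; rewrite hid_succ scpb mul1r.
    rewrite (eq_bigr (fun j => rho k' i' * (mW th k' i' j * mvnn_hidden t th 10%:R k' j 0)));
      last by move=> j _; rewrite scpW mulrA.
    rewrite -mulr_sumr /rho; case: ifP => [/andP[/eqP ek /eqP ei]|_]; last by rewrite mul1r.
    subst k'; have ei' : i' = i by apply: val_inj.
    subst i'; rewrite -/c !brelu_sat //; [exact: ltW | exact: ltW | exact: ltW | clear -hsc; lra].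
  have same := hid_same10 pres.
  have hh : hinge t ps ans (scp rho 1 th) <= hinge t ps ans th.
    apply: hinge_mono => //.
    - move=> x hx; rewrite !evalE; apply: ler_sum => j _; rewrite /=.
      apply: ler_wpM2l; first exact: hf.2.
      apply: (hid_mono _ ht _ _ _ H (leqnn H)) => //.
      + move=> k' hk' i' j'; rewrite scpW; have [hW' _] := feasW hf _ hk'.
        have := hW' i' j'; case/andP: (hr k' i') => ? ? ?; split; [exact: mulr_ge0 | exact: ler_piMl].
      + by move=> k' hk' i'; rewrite scpb mul1r.
    - by rewrite !eval_at0.
    - by rewrite !evalE; apply: eq_bigr => j _; rewrite same.
  have := sqnorm_scp _ _ _ hr hb1 (LM _ _ _ hs hss hr hb1 hr2 hb2 hh).
  case=> hz _.
  have hWz : forall j, mW th k i j = 0.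
    move=> j; have := hz (Ordinal hk) i j; rewrite /rho /= !eqxx /=.
    move/eqP; rewrite mulf_eq0 sqrf_eq0 (negbTE (aux_sq _ hs hs1)) /=.
    by move/eqP.
  have : c = 0 by rewrite /c big1 // => j _; rewrite hWz mul0r.
  by move=> c0; move: hc; rewrite c0 ltxx.
have hb0 : forall k, (k < H)%N -> forall i, mb th k i 0 = 0.
  move=> k0 hk0 i0.
  pose r := fun (k' : nat) (i' : 'I_(wd d k'.+1)) =>
    (if (k' < H)%N then mvnn_hidden t th 10%:R k'.+1 i' 0 /
       (\sum_j mW th k' i' j * mvnn_hidden t th 10%:R k' j 0) else 1) : R.
  have hrc : forall k', (k' < H)%N -> forall i',
      0 <= r k' i' <= 1 /\
      r k' i' * (\sum_j mW th k' i' j * mvnn_hidden t th 10%:R k' j 0)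
        = mvnn_hidden t th 10%:R k'.+1 i' 0.
    move=> k' hk' i'; rewrite /r hk'.
    have [hW hB] := feasW hf _ hk'.
    have hBi := hB i'.
    set c := \sum_j mW th k' i' j * mvnn_hidden t th 10%:R k' j 0.
    have hc : 0 <= c.
      apply: sumr_ge0 => j _; apply: mulr_ge0 => //; apply: hid_ge0 => //; exact: ltnW.
    have hu : mvnn_hidden t th 10%:R k'.+1 i' 0 = brelu (t k') (c + mb th k' i' 0) by rewrite hid_succ.
    have hu0 : 0 <= mvnn_hidden t th 10%:R k'.+1 i' 0 by apply: hid_ge0.
    have hu1 : mvnn_hidden t th 10%:R k'.+1 i' 0 <= c.
      rewrite hu; apply: (le_trans (brelu_lemax _ _)).
      by rewrite ge_max hc /=; clear -hBi; lra.
    have [c0|cpos] := eqVneq c 0.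
      rewrite c0 invr0 mulr0 mul0r; split; first by rewrite lexx ler01.
      by apply/esym/le_anti; rewrite hu0 -c0 hu1.
    have cgt : 0 < c by rewrite lt_def cpos hc.
    split; last by rewrite divfK.
    by rewrite divr_ge0 //= ler_pdivrMr // mul1r.
  pose rho := fun (k' : nat) (i' : 'I_(wd d k'.+1)) => (1 - s0 + s0 * r k' i') : R.
  have hs01 : s0 <= 1 by apply: le_trans h2i.
  have hr01 : forall k' i', 0 <= r k' i' <= 1.
    move=> k' i'; case: (ltnP k' H) => hk'; first by case: (hrc k' hk' i').
    by rewrite /r ltnNge hk' /= ler01 lexx.
  have hr : forall k' i', 0 <= rho k' i' <= 1.
    by move=> k' i'; rewrite /rho; apply: aux_rho => //; exact: ltW.
  have hr2 : forall k' i', (rho k' i' - 1) ^+ 2 <= s0 ^+ 2.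
    move=> k' i'; case/andP: (hr01 k' i') => ha hb; rewrite /rho.
    rewrite (_ : 1 - s0 + s0 * r k' i' - 1 = s0 * (r k' i' - 1)); last by ring.
    rewrite exprMn -[leRHS]mulr1; apply: ler_wpM2l; first exact: sqr_ge0.
    rewrite expr2; clear -ha hb; nra.

  have hb : 0 <= 1 - s0 <= 1 by apply/andP; split; clear -hs0 hs01; lra.
  have hb2 : (1 - s0 - 1) ^+ 2 <= s0 ^+ 2.
    by rewrite (_ : 1 - s0 - 1 = - s0) ?sqrrN //; ring.
  have hfe : mvnn_feasible (scp rho (1 - s0) th).
    by apply: scp_feas => //; [move=> k' i'; case/andP: (hr k' i') | clear -hs01; lra].
  have preE : forall k', (k' < H)%N -> forall i',
      \sum_j mW (scp rho (1 - s0) th) k' i' j * mvnn_hidden t th 10%:R k' j 0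
        + mb (scp rho (1 - s0) th) k' i' 0 =
      (1 - s0) * (\sum_j mW th k' i' j * mvnn_hidden t th 10%:R k' j 0 + mb th k' i' 0)
      + s0 * mvnn_hidden t th 10%:R k'.+1 i' 0.
    move=> k' hk' i'; rewrite scpb.
    rewrite (eq_bigr (fun j => rho k' i' * (mW th k' i' j * mvnn_hidden t th 10%:R k' j 0)));
      last by move=> j _; rewrite scpW mulrA.
    have [_ hrc2] := hrc k' hk' i'.
    rewrite -mulr_sumr -hrc2 /rho; ring.
  have pres : forall k', (k' < H)%N -> forall i',
      brelu (t k') (\sum_j mW (scp rho (1 - s0) th) k' i' j * mvnn_hidden t th 10%:R k' j 0
                    + mb (scp rho (1 - s0) th) k' i' 0) = mvnn_hidden t th 10%:R k'.+1 i' 0.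
    move=> k' hk' i'; rewrite preE // hid_succ.
    have hna := nsat k' hk' i'; have htk := ht k' hk'.
    move: hna; set a := \sum_j _ + _ => hna.
    have [ha|ha] := leP 0 a.
      rewrite (@brelu_id R (t k') a) //.
      by rewrite (_ : (1 - s0) * a + s0 * a = a) ?brelu_id //; ring.
    rewrite (@brelu_neg R (t k') a) ?mulr0 ?addr0; last 2 first.
    - exact: ltW.
    - exact: ltW.
    by apply: brelu_neg; [exact: ltW | exact: aux_neg].
  have same := hid_same10 pres.
  have nsat' : forall k', (k' < H)%N -> forall i',
      \sum_j mW (scp rho (1 - s0) th) k' i' j * mvnn_hidden t (scp rho (1 - s0) th) 10%:R k' j 0
        + mb (scp rho (1 - s0) th) k' i' 0 <= t k'.
    move=> k' hk' i'.
    rewrite (eq_bigr (fun j => mW (scp rho (1 - s0) th) k' i' j * mvnn_hidden t th 10%:R k' j 0));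
      last by move=> j _; rewrite same // ltnW.
    rewrite preE //.
    have hna := nsat k' hk' i'; have htk := ht k' hk'.
    have hu : mvnn_hidden t th 10%:R k'.+1 i' 0 <= t k'.
      by rewrite hid_succ; apply: brelu_lec; exact: ltW.
    by apply: aux_conv => //; exact: ltW.
  have hh : hinge t ps ans (scp rho (1 - s0) th) <= hinge t ps ans th.
    rewrite (hinge_star t ps ans (scp rho (1 - s0) th) th hans) //.
    - exact: eval_at0.
    - exact: eval_at0.
    - exact: eval_star.
    - exact: eval_star.
    - by rewrite !evalE; apply: eq_bigr => j _; rewrite same.
  have := sqnorm_scp _ _ _ hr hb (LM _ _ _ hs0 (lexx _) hr hb hr2 hb2 hh).
  case=> _ hz.
  have := hz (Ordinal hk0) i0; rewrite /=.
  move/eqP; rewrite mulf_eq0 sqrf_eq0 (negbTE (aux_sq _ hs0 hs01)) /=.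
  by move/eqP.
exists (mvnn_eval t th 10%:R / 10%:R) => x hx.
have hx0 : 0 <= (x%:R : R) by [].
have hx1 : (x%:R : R) <= 10%:R by rewrite ler_nat.
have hl0 : 0 <= (x%:R : R) / 10%:R by rewrite divr_ge0.
have hl1 : (x%:R : R) / 10%:R <= 1 by rewrite ler_pdivrMr // mul1r.
have lin : forall k, (k <= H)%N -> forall i,
    mvnn_hidden t th x%:R k i 0 = x%:R / 10%:R * mvnn_hidden t th 10%:R k i 0.
  elim=> [|k IH] hk i.
    by rewrite !hid0E divff ?mulr1 // pnatr_eq0.
  rewrite !hid_succ !hb0 // !addr0.
  rewrite (eq_bigr (fun j => x%:R / 10%:R * (mW th k i j * mvnn_hidden t th 10%:R k j 0)));
    last by move=> j _; rewrite (IH (ltnW hk)) mulrCA.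
  rewrite -mulr_sumr brelu_scale //; first exact/ltW/ht.
  by have := nsat k hk i; rewrite hb0 // addr0.
rewrite evalE.
rewrite (eq_bigr (fun j => x%:R / 10%:R * (mWout th 0 j * mvnn_hidden t th 10%:R H j 0)));
  last by move=> j _; rewrite lin // mulrCA.
rewrite -mulr_sumr -evalE; ring.
Qed.
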